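(* Away from characteristic points of a regular surface $\Sigma\subset E(1,1)$, the mean curvature $\mathcal H_{\nabla^{1,\beta},L}:=\mathrm{tr}\,II^{\nabla^{1,\beta},L}$ satisfies $$\lim_{L\to+\infty}\mathcal H_{\nabla^{1,\beta},L}=X_1(\bar p)+X_2(\bar q).$$
   Context: The group $E(1,1)$ of rigid motions of the Minkowski plane is modeled on $\mathbb{R}^3$ with coordinates $(x_1,x_2,x_3)$. Put $X_1=\partial_{x_3}$, $X_2=\frac{1}{\sqrt2}(-e^{x_3}\partial_{x_1}+e^{-x_3}\partial_{x_2})$, $X_3=-\frac1{\sqrt2}(e^{x_3}\partial_{x_1}+e^{-x_3}\partial_{x_2})$, with dual coframe $\omega_1=dx_3$, $\omega_2=\frac1{\sqrt2}(-e^{-x_3}dx_1+e^{x_3}dx_2)$, $\omega=-\frac1{\sqrt2}(e^{-x_3}dx_1+e^{x_3}dx_2)$. For a constant $L>0$, $g_L=\omega_1\otimes\omega_1+\omega_2\otimes\omega_2+L\,\omega\otimes\omega$, so $X_1,X_2,\widetilde X_3:=L^{-1/2}X_3$ is $g_L$-orthonormal; $\langle\cdot,\cdot\rangle_L$ denotes $g_L$ and $\nabla$ its Levi-Civita connection. Let $P^1$, $P^{1,\perp}$ be the $g_L$-orthogonal projections onto $\mathrm{span}\{X_1,X_2\}$ and onto $\mathrm{span}\{X_3\}$. For a real constant $\beta$, $\nabla^{1,\beta}_XY=(1-\beta)\nabla_XY+\beta P^1\nabla_X(P^1Y)+\beta P^{1,\perp}\nabla_X(P^{1,\perp}Y)$.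 A regular surface is a Euclidean $C^2$-smooth compact oriented surface $\Sigma=\{u=0\}$ with $u$ Euclidean $C^2$ and nonvanishing Euclidean gradient; $\nabla_Hu=X_1(u)X_1+X_2(u)X_2$; characteristic points are those with $\nabla_Hu=0$. Put $p=X_1u$, $q=X_2u$, $r=\widetilde X_3u$, $l=\sqrt{p^2+q^2}$, $l_L=\sqrt{p^2+q^2+r^2}$, $\bar p=p/l$, $\bar q=q/l$, $\bar p_L=p/l_L$, $\bar q_L=q/l_L$, $\bar r_L=r/l_L$; $v_L=\bar p_LX_1+\bar q_LX_2+\bar r_L\widetilde X_3$, $e_1=\bar qX_1-\bar pX_2$, $e_2=\bar r_L\bar pX_1+\bar r_L\bar qX_2-\frac{l}{l_L}\widetilde X_3$. The second fundamental form is $II^{\nabla^{1,\beta},L}=(\langle\nabla^{1,\beta}_{e_i}v_L,e_j\rangle_L)_{i,j=1,2}$. *)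

(* Defs.v *)
From Stdlib Require Import Reals List.
From Coquelicot Require Import Coquelicot.
Open Scope R_scope.

(* Points of E(1,1) = R^3 with coordinates (x1,x2,x3); also used for Euclidean
   components of tangent vectors (the vector a1 d_x1 + a2 d_x2 + a3 d_x3). *)
Definition pt : Type := (R * R * R)%type.
Definition c1 (x : pt) : R := fst (fst x).
Definition c2 (x : pt) : R := snd (fst x).
Definition c3 (x : pt) : R := snd x.
Definition mk (a b c : R) : pt := (a, b, c).

(* coordinate i (1,2,3; anything else = 3) *)
Definition coord (i : nat) (x : pt) : R :=
  match i with 1%nat => c1 x | 2%nat => c2 x | _ => c3 x end.
Definition upd (i : nat) (x : pt) (t : R) : pt :=
  match i with
  | 1%nat => mk t (c2 x) (c3 x)
  | 2%nat => mk (c1 x) t (c3 x)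
  | _ => mk (c1 x) (c2 x) t
  end.

Definition partial (i : nat) (f : pt -> R) (x : pt) : R :=
  Derive (fun t => f (upd i x t)) (coord i x).

Definition C2_on (U : pt -> Prop) (u : pt -> R) : Prop :=
  forall x, U x ->
    continuous u x /\
    (forall i, (1 <= i <= 3)%nat ->
       ex_derive (fun t => u (upd i x t)) (coord i x) /\
       continuous (partial i u) x /\
       (forall j, (1 <= j <= 3)%nat ->
          ex_derive (fun t => partial i u (upd j x t)) (coord j x) /\
          continuous (partial j (partial i u)) x)).

Definition compact_set (K : pt -> Prop) : Prop :=
  forall (I : Type) (O : I -> pt -> Prop),
    (forall i, open (O i)) ->
    (forall x, K x -> exists i, O i x) ->
    exists l : list I, forall x, K x -> exists i, In i l /\ O i x.

Definition egrad_nonzero (u : pt -> R) (x : pt) : Prop :=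
  ~ (partial 1 u x = 0 /\ partial 2 u x = 0 /\ partial 3 u x = 0).

(* vector fields, in Euclidean components *)
Definition vfield := pt -> pt.
Definition vadd (V W : vfield) : vfield :=
  fun x => mk (c1 (V x) + c1 (W x)) (c2 (V x) + c2 (W x)) (c3 (V x) + c3 (W x)).
Definition vsc (f : pt -> R) (V : vfield) : vfield :=
  fun x => mk (f x * c1 (V x)) (f x * c2 (V x)) (f x * c3 (V x)).

Definition act (X : vfield) (f : pt -> R) : pt -> R :=
  fun x => c1 (X x) * partial 1 f x + c2 (X x) * partial 2 f x + c3 (X x) * partial 3 f x.

Definition bracket (X Y : vfield) : vfield :=
  fun x => mk (act X (fun y => c1 (Y y)) x - act Y (fun y => c1 (X y)) x)
              (act X (fun y => c2 (Y y)) x - act Y (fun y => c2 (X y)) x)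
              (act X (fun y => c3 (Y y)) x - act Y (fun y => c3 (X y)) x).

Definition X1 : vfield := fun x => mk 0 0 1.
Definition X2 : vfield := fun x =>
  mk (- exp (c3 x) / sqrt 2) (exp (- c3 x) / sqrt 2) 0.
Definition X3 : vfield := fun x =>
  mk (- exp (c3 x) / sqrt 2) (- exp (- c3 x) / sqrt 2) 0.
Definition X3t (L : R) : vfield := vsc (fun _ => / sqrt L) X3.

Definition om1 (x v : pt) : R := c3 v.
Definition om2 (x v : pt) : R := (- exp (- c3 x) * c1 v + exp (c3 x) * c2 v) / sqrt 2.
Definition om3 (x v : pt) : R := - (exp (- c3 x) * c1 v + exp (c3 x) * c2 v) / sqrt 2.

Definition gL (L : R) (V W : vfield) : pt -> R :=
  fun x => om1 x (V x) * om1 x (W x) + om2 x (V x) * om2 x (W x)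
           + L * (om3 x (V x) * om3 x (W x)).

(* Koszul expression: equals 2 g_L(nabla_X Y, Z) for the Levi-Civita connection *)
Definition koszul (L : R) (X Y Z : vfield) : pt -> R :=
  fun x => act X (gL L Y Z) x + act Y (gL L X Z) x - act Z (gL L X Y) x
           + gL L (bracket X Y) Z x - gL L (bracket X Z) Y x - gL L (bracket Y Z) X x.

(* Levi-Civita connection of g_L, expanded in the g_L-orthonormal frame X1, X2, X3t *)
Definition nablaLC (L : R) (X Y : vfield) : vfield :=
  vadd (vsc (fun x => / 2 * koszul L X Y X1 x) X1)
   (vadd (vsc (fun x => / 2 * koszul L X Y X2 x) X2)
         (vsc (fun x => / 2 * koszul L X Y (X3t L) x) (X3t L))).

Definition P1 (L : R) (Y : vfield) : vfield :=
  vadd (vsc (gL L Y X1) X1) (vsc (gL L Y X2) X2).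
Definition P1perp (L : R) (Y : vfield) : vfield :=
  vsc (gL L Y (X3t L)) (X3t L).

Definition nabla1b (L beta : R) (X Y : vfield) : vfield :=
  vadd (vsc (fun _ => 1 - beta) (nablaLC L X Y))
   (vadd (vsc (fun _ => beta) (P1 L (nablaLC L X (P1 L Y))))
         (vsc (fun _ => beta) (P1perp L (nablaLC L X (P1perp L Y))))).

Section Quantities.
Variables (L : R) (u : pt -> R).
Definition pp : pt -> R := act X1 u.
Definition qq : pt -> R := act X2 u.
Definition rr : pt -> R := act (X3t L) u.
Definition ll : pt -> R := fun x => sqrt (pp x ^ 2 + qq x ^ 2).
Definition lL : pt -> R := fun x => sqrt (pp x ^ 2 + qq x ^ 2 + rr x ^ 2).
Definition pbar : pt -> R := fun x => pp x / ll x.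
Definition qbar : pt -> R := fun x => qq x / ll x.
Definition pbarL : pt -> R := fun x => pp x / lL x.
Definition qbarL : pt -> R := fun x => qq x / lL x.
Definition rbarL : pt -> R := fun x => rr x / lL x.
Definition vL : vfield :=
  vadd (vsc pbarL X1) (vadd (vsc qbarL X2) (vsc rbarL (X3t L))).
Definition e1 : vfield := vadd (vsc qbar X1) (vsc (fun x => - pbar x) X2).
Definition e2 : vfield :=
  vadd (vsc (fun x => rbarL x * pbar x) X1)
   (vadd (vsc (fun x => rbarL x * qbar x) X2)
         (vsc (fun x => - (ll x / lL x)) (X3t L))).
End Quantities.

Definition meanH (L beta : R) (u : pt -> R) (x : pt) : R :=
  gL L (nabla1b L beta (e1 u) (vL L u)) (e1 u) x
  + gL L (nabla1b L beta (e2 L u) (vL L u)) (e2 L u) x.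

(* Main.v *)
Require Import Defs.
From Stdlib Require Import Reals Lra Lia FunctionalExtensionality.
From Coquelicot Require Import Coquelicot.
Open Scope R_scope.


Lemma upd_coord j x : (1 <= j <= 3)%nat -> upd j x (coord j x) = x.
Proof.
  intros H; destruct x as [[a b] c].
  destruct j as [|[|[|[|j]]]]; try lia; reflexivity.
Qed.

Definition good (x : pt) (f : pt -> R) : Prop :=
  forall j, (1 <= j <= 3)%nat -> ex_derive (fun t => f (upd j x t)) (coord j x).

Lemma good_intro x f : (forall j, (1 <= j <= 3)%nat -> ex_derive (fun t => f (upd j x t)) (coord j x)) -> good x f.
Proof. auto. Qed.

Section G.
Variable x : pt.

Lemma good_const c : good x (fun _ => c).
Proof. intros j _. apply ex_derive_const. Qed.
Lemma partial_const c j : partial j (fun _ => c) x = 0.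
Proof. unfold partial. apply Derive_const. Qed.

Lemma good_plus f g : good x f -> good x g -> good x (fun y => f y + g y).
Proof. intros Hf Hg j Hj. apply (ex_derive_plus (fun t => f (upd j x t)) (fun t => g (upd j x t))); auto. Qed.
Lemma partial_plus f g j : good x f -> good x g -> (1 <= j <= 3)%nat ->
  partial j (fun y => f y + g y) x = partial j f x + partial j g x.
Proof. intros Hf Hg Hj. unfold partial.
  apply (Derive_plus (fun t => f (upd j x t)) (fun t => g (upd j x t))); auto. Qed.

Lemma good_minus f g : good x f -> good x g -> good x (fun y => f y - g y).
Proof. intros Hf Hg j Hj. apply (ex_derive_minus (fun t => f (upd j x t)) (fun t => g (upd j x t))); auto. Qed.
Lemma partial_minus f g j : good x f -> good x g -> (1 <= j <= 3)%nat ->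
  partial j (fun y => f y - g y) x = partial j f x - partial j g x.
Proof. intros Hf Hg Hj. unfold partial.
  apply (Derive_minus (fun t => f (upd j x t)) (fun t => g (upd j x t))); auto. Qed.

Lemma good_opp f : good x f -> good x (fun y => - f y).
Proof. intros Hf j Hj. apply (ex_derive_opp (fun t => f (upd j x t))); auto. Qed.
Lemma partial_opp f j : partial j (fun y => - f y) x = - partial j f x.
Proof. unfold partial. apply (Derive_opp (fun t => f (upd j x t))). Qed.

Lemma good_mult f g : good x f -> good x g -> good x (fun y => f y * g y).
Proof. intros Hf Hg j Hj. apply (ex_derive_mult (fun t => f (upd j x t)) (fun t => g (upd j x t))); auto. Qed.
Lemma partial_mult f g j : good x f -> good x g -> (1 <= j <= 3)%nat ->
  partial j (fun y => f y * g y) x = partial j f x * g x + f x * partial j g x.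
Proof. intros Hf Hg Hj. unfold partial.
  rewrite (Derive_mult (fun t => f (upd j x t)) (fun t => g (upd j x t))); auto.
  rewrite upd_coord; auto. Qed.

Lemma good_div f g : good x f -> good x g -> g x <> 0 -> good x (fun y => f y / g y).
Proof. intros Hf Hg H0 j Hj. apply (ex_derive_div (fun t => f (upd j x t)) (fun t => g (upd j x t))); auto.
  rewrite upd_coord; auto. Qed.
Lemma partial_div f g j : good x f -> good x g -> g x <> 0 -> (1 <= j <= 3)%nat ->
  partial j (fun y => f y / g y) x = (partial j f x * g x - f x * partial j g x) / (g x ^ 2).
Proof. intros Hf Hg H0 Hj. unfold partial.
  rewrite (Derive_div (fun t => f (upd j x t)) (fun t => g (upd j x t))); auto;
  rewrite upd_coord; auto. Qed.

Lemma good_pow f n : good x f -> good x (fun y => f y ^ n).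
Proof. intros Hf j Hj. apply (ex_derive_pow (fun t => f (upd j x t))); auto. Qed.
Lemma partial_pow2 f j : good x f -> (1 <= j <= 3)%nat ->
  partial j (fun y => f y ^ 2) x = 2 * f x * partial j f x.
Proof. intros Hf Hj. unfold partial.
  rewrite (Derive_pow (fun t => f (upd j x t))); auto.
  rewrite upd_coord; auto. simpl. ring. Qed.

Lemma good_sqrt f : good x f -> 0 < f x -> good x (fun y => sqrt (f y)).
Proof. intros Hf H0 j Hj. destruct (Hf j Hj) as [df Hd].
  exists (df / (2 * sqrt (f (upd j x (coord j x))))).
  apply (is_derive_sqrt (fun t => f (upd j x t))); auto. rewrite upd_coord; auto. Qed.
Lemma partial_sqrt f j : good x f -> 0 < f x -> (1 <= j <= 3)%nat ->
  partial j (fun y => sqrt (f y)) x = partial j f x / (2 * sqrt (f x)).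
Proof. intros Hf H0 Hj. unfold partial. destruct (Hf j Hj) as [df Hd].
  assert (E: Derive (fun t => f (upd j x t)) (coord j x) = df) by (apply is_derive_unique; exact Hd).
  rewrite E.
  apply is_derive_unique.
  replace (f x) with (f (upd j x (coord j x))) by (rewrite upd_coord; auto).
  apply (is_derive_sqrt (fun t => f (upd j x t))); auto. rewrite upd_coord; auto. Qed.

End G.

Section Act.
Variable x : pt.
Variable V : vfield.

Lemma act_const c : act V (fun _ => c) x = 0.
Proof. unfold act. rewrite !partial_const. ring. Qed.

Ltac j3 := repeat split; lia.

Lemma act_plus f g : good x f -> good x g -> act V (fun y => f y + g y) x = act V f x + act V g x.
Proof. intros. unfold act. rewrite !partial_plus by (auto; lia). ring. Qed.
Lemma act_minus f g : good x f -> good x g -> act V (fun y => f y - g y) x = act V f x - act V g x.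
Proof. intros. unfold act. rewrite !partial_minus by (auto; lia). ring. Qed.
Lemma act_opp f : act V (fun y => - f y) x = - act V f x.
Proof. intros. unfold act. rewrite !partial_opp. ring. Qed.
Lemma act_mult f g : good x f -> good x g -> act V (fun y => f y * g y) x = act V f x * g x + f x * act V g x.
Proof. intros. unfold act. rewrite !partial_mult by (auto; lia). ring. Qed.
Lemma act_div f g : good x f -> good x g -> g x <> 0 ->
  act V (fun y => f y / g y) x = (act V f x * g x - f x * act V g x) / (g x ^ 2).
Proof. intros. unfold act. rewrite !partial_div by (auto; lia). field. auto. Qed.
Lemma act_pow2 f : good x f -> act V (fun y => f y ^ 2) x = 2 * f x * act V f x.
Proof. intros. unfold act. rewrite !partial_pow2 by (auto; lia). ring. Qed.
Lemma act_sqrt f : good x f -> 0 < f x -> act V (fun y => sqrt (f y)) x = act V f x / (2 * sqrt (f x)).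
Proof. intros. unfold act. rewrite !partial_sqrt by (auto; lia).
  assert (0 < sqrt (f x)) by (apply sqrt_lt_R0; auto). field. lra. Qed.
End Act.

Lemma good_exp3 x : good x (fun y => exp (c3 y)).
Proof. intros j Hj. destruct j as [|[|[|[|j]]]]; try lia; simpl.
  - apply ex_derive_const. - apply ex_derive_const.
  - unfold c3; simpl. exists (exp (snd x)). apply is_derive_exp. Qed.
Lemma good_expm3 x : good x (fun y => exp (- c3 y)).
Proof. intros j Hj. destruct j as [|[|[|[|j]]]]; try lia; simpl.
  - apply ex_derive_const. - apply ex_derive_const.
  - unfold c3; simpl. apply (ex_derive_comp exp (fun t => - t)).
    + exists (exp (- snd x)). apply is_derive_exp.
    + exists (-1). auto_derive; auto. Qed.

Lemma act_exp3 x V : act V (fun y => exp (c3 y)) x = c3 (V x) * exp (c3 x).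
Proof. unfold act, partial. simpl. rewrite !Derive_const.
  assert (E: Derive (fun t => exp t) (c3 x) = exp (c3 x)) by (apply is_derive_unique; auto_derive; auto; ring).
  rewrite E. ring. Qed.
Lemma act_expm3 x V : act V (fun y => exp (- c3 y)) x = - c3 (V x) * exp (- c3 x).
Proof. unfold act, partial. simpl. rewrite !Derive_const.
  assert (E: Derive (fun t => exp (- t)) (c3 x) = - exp (- c3 x)) by (apply is_derive_unique; auto_derive; auto; ring).
  rewrite E. ring. Qed.

Definition F (L : R) (a b c : pt -> R) : vfield :=
  vadd (vsc a X1) (vadd (vsc b X2) (vsc c (X3t L))).
Definition frp (L : R) (y : pt) (b1 b2 b3 : R) : pt :=
  F L (fun _ => b1) (fun _ => b2) (fun _ => b3) y.
Definition gLp (L : R) (y v w : pt) : R :=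
  om1 y v * om1 y w + om2 y v * om2 y w + L * (om3 y v * om3 y w).

Definition one : pt -> R := fun _ => 1.
Definition zero : pt -> R := fun _ => 0.
Ltac red_pt := cbv [om1 om2 om3 frp F vadd vsc X1 X2 X3t X3 mk Defs.c1 Defs.c2 Defs.c3 fst snd one zero].

Lemma s2_pos : 0 < sqrt 2.
Proof. apply sqrt_lt_R0. lra. Qed.
Lemma s2_sq : sqrt 2 * sqrt 2 = 2.
Proof. apply sqrt_sqrt. lra. Qed.
Lemma ee' t : exp t * exp (- t) = 1.
Proof. rewrite <- exp_plus. replace (t + - t) with 0 by ring. apply exp_0. Qed.

Lemma om1_fr L y b1 b2 b3 : om1 y (frp L y b1 b2 b3) = b1.
Proof. red_pt. ring. Qed.

Lemma om2_fr L y b1 b2 b3 : 0 < L -> om2 y (frp L y b1 b2 b3) = b2.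
Proof. intros HL. red_pt.
  destruct y as [[y1 y2] t]. pose proof (ee' t) as E. pose proof s2_pos. pose proof s2_sq.
  assert (0 < sqrt L) by (apply sqrt_lt_R0; auto).
  set (s := sqrt 2) in *. set (l := sqrt L) in *.
  replace (exp (- t)) with (/ exp t) by (rewrite exp_Ropp; auto).
  assert (exp t > 0) by apply exp_pos.
  transitivity (b2 * (2 / (s * s))).
  - field. lra.
  - rewrite H0. field. Qed.

Lemma om3_fr L y b1 b2 b3 : 0 < L -> om3 y (frp L y b1 b2 b3) = b3 / sqrt L.
Proof. intros HL. red_pt.
  destruct y as [[y1 y2] t]. pose proof s2_pos. pose proof s2_sq.
  assert (0 < sqrt L) by (apply sqrt_lt_R0; auto).
  set (s := sqrt 2) in *. set (l := sqrt L) in *.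
  replace (exp (- t)) with (/ exp t) by (rewrite exp_Ropp; auto).
  assert (exp t > 0) by apply exp_pos.
  transitivity (b3 / l * (2 / (s * s))).
  - field. lra.
  - rewrite H0. field. lra. Qed.

Lemma gLp_fr L y b1 b2 b3 c1 c2 c3 : 0 < L ->
  gLp L y (frp L y b1 b2 b3) (frp L y c1 c2 c3) = b1 * c1 + b2 * c2 + b3 * c3.
Proof. intros HL. unfold gLp. rewrite !om1_fr, !om2_fr, !om3_fr by auto.
  assert (0 < sqrt L) by (apply sqrt_lt_R0; auto).
  pose proof (sqrt_sqrt L (Rlt_le _ _ HL)).
  set (l := sqrt L) in *. rewrite <- H0. field. lra. Qed.

Lemma gL_FF L a1 a2 a3 b1 b2 b3 : 0 < L ->
  gL L (F L a1 a2 a3) (F L b1 b2 b3) = fun y => a1 y * b1 y + a2 y * b2 y + a3 y * b3 y.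
Proof. intros HL. apply functional_extensionality. intro y.
  exact (gLp_fr L y (a1 y) (a2 y) (a3 y) (b1 y) (b2 y) (b3 y) HL). Qed.

Lemma gL_pt L V W x : gL L V W x = gLp L x (V x) (W x).
Proof. reflexivity. Qed.


Lemma pt_eq (a b : pt) : Defs.c1 a = Defs.c1 b -> c2 a = c2 b -> c3 a = c3 b -> a = b.
Proof. destruct a as [[a1 a2] a3], b as [[b1 b2] b3]. unfold Defs.c1, c2, c3; simpl. intros; subst; auto. Qed.

Lemma X1_F L : X1 = F L one zero zero.
Proof. apply functional_extensionality; intros [[y1 y2] y3]. apply pt_eq;
  red_pt; ring. Qed.
Lemma X2_F L : X2 = F L zero one zero.
Proof. apply functional_extensionality; intros [[y1 y2] y3]. apply pt_eq;
  red_pt; ring. Qed.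
Lemma X3t_F L : X3t L = F L zero zero one.
Proof. apply functional_extensionality; intros [[y1 y2] y3]. apply pt_eq;
  red_pt; ring. Qed.

Lemma act_F L a1 a2 a3 f x :
  act (F L a1 a2 a3) f x = a1 x * act X1 f x + a2 x * act X2 f x + a3 x * act (X3t L) f x.
Proof. unfold act; red_pt; ring. Qed.

Opaque good act partial.
Ltac good_tac := cbv beta; repeat (first [
  assumption | apply good_const | exact (good_const _ 1) | exact (good_const _ 0) | apply good_exp3 | apply good_expm3
  | apply good_div | apply good_minus | apply good_plus | apply good_opp | apply good_mult
  | apply good_pow | apply good_sqrt ]).

Ltac nz_tac := cbv beta; first [ assumption | apply Rgt_not_eq; assumption | apply Rlt_not_eq; assumption
  | apply Rgt_not_eq; apply s2_pos | lra ].

Ltac side := first [ solve [good_tac] | good_tac; nz_tac | nz_tac ].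

Ltac act_step := first [
    rewrite act_const | rewrite act_exp3 | rewrite act_expm3
  | rewrite act_div by side | rewrite act_minus by side | rewrite act_plus by side
  | rewrite act_opp | rewrite act_mult by side | rewrite act_pow2 by side | rewrite act_sqrt by side ].

Lemma c1_F L b1 b2 b3 : (fun y => Defs.c1 (F L b1 b2 b3 y)) =
  fun y => b2 y * (- exp (c3 y) / sqrt 2) + b3 y * (/ sqrt L * (- exp (c3 y) / sqrt 2)).
Proof. apply functional_extensionality; intros [[y1 y2] y3]; red_pt; ring. Qed.
Lemma c2_F L b1 b2 b3 : (fun y => c2 (F L b1 b2 b3 y)) =
  fun y => b2 y * (exp (- c3 y) / sqrt 2) + b3 y * (/ sqrt L * (- exp (- c3 y) / sqrt 2)).
Proof. apply functional_extensionality; intros [[y1 y2] y3]; red_pt; ring. Qed.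
Lemma c3_F L b1 b2 b3 : (fun y => c3 (F L b1 b2 b3 y)) = b1.
Proof. apply functional_extensionality; intros [[y1 y2] y3]; red_pt; ring. Qed.
Lemma c3_Fx L b1 b2 b3 y : c3 (F L b1 b2 b3 y) = b1 y.
Proof. destruct y as [[y1 y2] y3]; red_pt; ring. Qed.

Lemma c1_mk a b c : Defs.c1 (mk a b c) = a. Proof. reflexivity. Qed.
Lemma c2_mk a b c : c2 (mk a b c) = b. Proof. reflexivity. Qed.
Lemma c3_mk a b c : c3 (mk a b c) = c. Proof. reflexivity. Qed.
Lemma bracket_F L x a1 a2 a3 b1 b2 b3 : 0 < L ->
  good x a1 -> good x a2 -> good x a3 -> good x b1 -> good x b2 -> good x b3 ->
  bracket (F L a1 a2 a3) (F L b1 b2 b3) x =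
  frp L x (act (F L a1 a2 a3) b1 x - act (F L b1 b2 b3) a1 x)
          (act (F L a1 a2 a3) b2 x - act (F L b1 b2 b3) a2 x + (a1 x * b3 x - a3 x * b1 x) / sqrt L)
          (act (F L a1 a2 a3) b3 x - act (F L b1 b2 b3) a3 x + sqrt L * (a1 x * b2 x - a2 x * b1 x)).
Proof.
  intros HL Ha1 Ha2 Ha3 Hb1 Hb2 Hb3.
  assert (HsL : 0 < sqrt L) by (apply sqrt_lt_R0; auto).
  pose proof s2_pos.
  unfold bracket. rewrite !c1_F, !c2_F, !c3_F.
  apply pt_eq; rewrite ?c1_mk, ?c2_mk, ?c3_mk.
  - repeat act_step. rewrite !c3_Fx.
    destruct x as [[y1 y2] y3]. red_pt. field. lra.
  - repeat act_step. rewrite !c3_Fx.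
    destruct x as [[y1 y2] y3]. red_pt. field. lra.
  - destruct x as [[y1 y2] y3]. red_pt. ring.
Qed.
Opaque good act partial.

Definition S3 (lam a1 a2 a3 b1 b2 b3 d1 d2 d3 : R) : R :=
  lam * (a1 * b2 - a2 * b1) * d3 + / lam * (a1 * b3 - a3 * b1) * d2.

Lemma koszul_F L x a1 a2 a3 b1 b2 b3 d1 d2 d3 : 0 < L ->
  good x a1 -> good x a2 -> good x a3 -> good x b1 -> good x b2 -> good x b3 ->
  good x d1 -> good x d2 -> good x d3 ->
  koszul L (F L a1 a2 a3) (F L b1 b2 b3) (F L d1 d2 d3) x =
  2 * (act (F L a1 a2 a3) b1 x * d1 x + act (F L a1 a2 a3) b2 x * d2 x + act (F L a1 a2 a3) b3 x * d3 x)
  + S3 (sqrt L) (a1 x) (a2 x) (a3 x) (b1 x) (b2 x) (b3 x) (d1 x) (d2 x) (d3 x)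
  - S3 (sqrt L) (a1 x) (a2 x) (a3 x) (d1 x) (d2 x) (d3 x) (b1 x) (b2 x) (b3 x)
  - S3 (sqrt L) (b1 x) (b2 x) (b3 x) (d1 x) (d2 x) (d3 x) (a1 x) (a2 x) (a3 x).
Proof.
  intros HL Ha1 Ha2 Ha3 Hb1 Hb2 Hb3 Hd1 Hd2 Hd3.
  assert (HsL : 0 < sqrt L) by (apply sqrt_lt_R0; auto).
  unfold koszul. rewrite !gL_FF by auto. rewrite !gL_pt.
  rewrite !bracket_F by auto.
  change (F L a1 a2 a3 x) with (frp L x (a1 x) (a2 x) (a3 x)).
  change (F L b1 b2 b3 x) with (frp L x (b1 x) (b2 x) (b3 x)).
  change (F L d1 d2 d3 x) with (frp L x (d1 x) (d2 x) (d3 x)).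
  rewrite !gLp_fr by auto.
  repeat act_step.
  unfold S3. field. lra.
Qed.
Opaque good act partial.

Lemma gL_vadd L V W Z y : gL L (vadd V W) Z y = gL L V Z y + gL L W Z y.
Proof. unfold gL, om1, om2, om3, vadd; cbv beta; rewrite ?c1_mk, ?c2_mk, ?c3_mk. unfold Rdiv. ring. Qed.
Lemma gL_vsc L f V Z y : gL L (vsc f V) Z y = f y * gL L V Z y.
Proof. unfold gL, om1, om2, om3, vsc; cbv beta; rewrite ?c1_mk, ?c2_mk, ?c3_mk. unfold Rdiv. ring. Qed.

Lemma P1_eq L V : P1 L V = F L (gL L V X1) (gL L V X2) zero.
Proof. apply functional_extensionality; intros [[y1 y2] y3]. unfold P1.
  apply pt_eq; red_pt; ring. Qed.
Lemma P1perp_eq L V : P1perp L V = F L zero zero (gL L V (X3t L)).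
Proof. apply functional_extensionality; intros [[y1 y2] y3]. unfold P1perp.
  apply pt_eq; red_pt; ring. Qed.

Lemma gL_F_X1 L b1 b2 b3 : 0 < L -> gL L (F L b1 b2 b3) X1 = b1.
Proof. intros. rewrite (X1_F L), gL_FF by auto. apply functional_extensionality; intro y. unfold one, zero. ring. Qed.
Lemma gL_F_X2 L b1 b2 b3 : 0 < L -> gL L (F L b1 b2 b3) X2 = b2.
Proof. intros. rewrite (X2_F L), gL_FF by auto. apply functional_extensionality; intro y. unfold one, zero. ring. Qed.
Lemma gL_F_X3 L b1 b2 b3 : 0 < L -> gL L (F L b1 b2 b3) (X3t L) = b3.
Proof. intros. rewrite (X3t_F L), gL_FF by auto. apply functional_extensionality; intro y. unfold one, zero. ring. Qed.

Lemma nablaLC_comp L x X Y d1 d2 d3 : 0 < L ->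
  gL L (nablaLC L X Y) (F L d1 d2 d3) x =
  / 2 * koszul L X Y X1 x * d1 x + / 2 * koszul L X Y X2 x * d2 x + / 2 * koszul L X Y (X3t L) x * d3 x.
Proof. intros HL. rewrite gL_pt.
  change (nablaLC L X Y x) with (frp L x (/ 2 * koszul L X Y X1 x) (/ 2 * koszul L X Y X2 x) (/ 2 * koszul L X Y (X3t L) x)).
  change (F L d1 d2 d3 x) with (frp L x (d1 x) (d2 x) (d3 x)).
  rewrite gLp_fr by auto. ring. Qed.

Lemma good_one x : good x one. Proof. exact (good_const x 1). Qed.
Lemma good_zero x : good x zero. Proof. exact (good_const x 0). Qed.
Lemma act_zero V x : act V zero x = 0. Proof. exact (act_const x V 0). Qed.
Lemma act_one V x : act V one x = 0. Proof. exact (act_const x V 1). Qed.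

Lemma gL_X1 L V : gL L V X1 = gL L V (F L one zero zero).
Proof. rewrite <- (X1_F L). reflexivity. Qed.
Lemma gL_X2 L V : gL L V X2 = gL L V (F L zero one zero).
Proof. rewrite <- (X2_F L). reflexivity. Qed.
Lemma gL_X3 L V : gL L V (X3t L) = gL L V (F L zero zero one).
Proof. rewrite <- (X3t_F L). reflexivity. Qed.

Definition Gam (lam beta a1 a2 a3 b1 b2 b3 : R) : R :=
  (1 - beta) * / lam * b3 * a1 * a2
  + ((1 - beta) * lam + beta * ((lam + / lam) / 2)) * b2 * a1 * a3
  - (2 - beta) * ((lam + / lam) / 2) * b1 * a2 * a3.

Lemma term_F L beta x a1 a2 a3 b1 b2 b3 : 0 < L ->
  good x a1 -> good x a2 -> good x a3 -> good x b1 -> good x b2 -> good x b3 ->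
  gL L (nabla1b L beta (F L a1 a2 a3) (F L b1 b2 b3)) (F L a1 a2 a3) x =
  act (F L a1 a2 a3) b1 x * a1 x + act (F L a1 a2 a3) b2 x * a2 x + act (F L a1 a2 a3) b3 x * a3 x
  + Gam (sqrt L) beta (a1 x) (a2 x) (a3 x) (b1 x) (b2 x) (b3 x).
Proof.
  intros HL Ha1 Ha2 Ha3 Hb1 Hb2 Hb3.
  assert (HsL : 0 < sqrt L) by (apply sqrt_lt_R0; auto).
  unfold nabla1b. rewrite !gL_vadd, !gL_vsc.
  rewrite !P1_eq, !P1perp_eq.
  rewrite !gL_F_X1, !gL_F_X2, !gL_F_X3 by auto.
  rewrite !gL_FF by auto. cbv beta.
  rewrite !gL_X1, !gL_X2, !gL_X3. rewrite !nablaLC_comp by auto.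
  rewrite (X1_F L), (X2_F L), (X3t_F L).
  rewrite !koszul_F by (auto; try apply good_one; try apply good_zero).
  rewrite ?act_one, ?act_zero. unfold one, zero, S3, Gam. rewrite ?act_const. field. lra.
Qed.

Definition QF (M11 M12 M13 M21 M22 M23 M31 M32 M33 a1 a2 a3 : R) : R :=
  M11*a1*a1 + M12*a1*a2 + M13*a1*a3 + M21*a2*a1 + M22*a2*a2 + M23*a2*a3
  + M31*a3*a1 + M32*a3*a2 + M33*a3*a3.

Lemma quad_trace M11 M12 M13 M21 M22 M23 M31 M32 M33 a1 a2 a3 b1 b2 b3 v1 v2 v3 :
  a1*a1 + b1*b1 + v1*v1 = 1 -> a2*a2 + b2*b2 + v2*v2 = 1 -> a3*a3 + b3*b3 + v3*v3 = 1 ->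
  a1*a2 + b1*b2 + v1*v2 = 0 -> a1*a3 + b1*b3 + v1*v3 = 0 -> a2*a3 + b2*b3 + v2*v3 = 0 ->
  QF M11 M12 M13 M21 M22 M23 M31 M32 M33 a1 a2 a3 + QF M11 M12 M13 M21 M22 M23 M31 M32 M33 b1 b2 b3
  = M11 + M22 + M33 - QF M11 M12 M13 M21 M22 M23 M31 M32 M33 v1 v2 v3.
Proof.
  intros H11 H22 H33 H12 H13 H23.
  transitivity (M11 * (a1*a1 + b1*b1 + v1*v1) + M22 * (a2*a2 + b2*b2 + v2*v2) + M33 * (a3*a3 + b3*b3 + v3*v3)
    + (M12 + M21) * (a1*a2 + b1*b2 + v1*v2) + (M13 + M31) * (a1*a3 + b1*b3 + v1*v3)
    + (M23 + M32) * (a2*a3 + b2*b3 + v2*v3) - QF M11 M12 M13 M21 M22 M23 M31 M32 M33 v1 v2 v3).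
  - unfold QF. ring.
  - rewrite H11, H22, H33, H12, H13, H23. ring.
Qed.

Definition TT lam beta a1 a2 a3 v1 v2 v3 D11 D12 D13 D21 D22 D23 D31 D32 D33 : R :=
  (a1*D11 + a2*D21 + a3*D31)*a1 + (a1*D12 + a2*D22 + a3*D32)*a2 + (a1*D13 + a2*D23 + a3*D33)*a3
  + Gam lam beta a1 a2 a3 v1 v2 v3.

Lemma alg P Q s t lam beta D11 D12 D13 D21 D22 D23 D31 D32 D33 :
  P*P + Q*Q = 1 -> s*s + t*t = 1 -> lam <> 0 ->
  (s*P)*D11 + (s*Q)*D12 + t*D13 = 0 ->
  (s*P)*D21 + (s*Q)*D22 + t*D23 = 0 ->
  (s*P)*D31 + (s*Q)*D32 + t*D33 = 0 ->
  TT lam beta Q (-P) 0 (s*P) (s*Q) t D11 D12 D13 D21 D22 D23 D31 D32 D33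
  + TT lam beta (t*P) (t*Q) (-s) (s*P) (s*Q) t D11 D12 D13 D21 D22 D23 D31 D32 D33
  = D11 + D22 + D33.
Proof.
  intros HPQ Hst Hl h1 h2 h3.
  set (mu := (lam + / lam) / 2).
  set (c12 := (1 - beta) * / lam * t).
  set (c13 := ((1 - beta) * lam + beta * mu) * (s*Q)).
  set (c23 := - (2 - beta) * mu * (s*P)).
  assert (E : forall a1 a2 a3, TT lam beta a1 a2 a3 (s*P) (s*Q) t D11 D12 D13 D21 D22 D23 D31 D32 D33
     = QF D11 (D21 + c12) (D31 + c13) D12 D22 (D32 + c23) D13 D23 D33 a1 a2 a3).
  { intros. unfold TT, QF, Gam, c12, c13, c23, mu. ring. }
  rewrite !E.
  rewrite (quad_trace _ _ _ _ _ _ _ _ _ Q (-P) 0 (t*P) (t*Q) (-s) (s*P) (s*Q) t).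
  - unfold QF.
    transitivity (D11 + D22 + D33 - ((s*P) * ((s*P)*D11 + (s*Q)*D12 + t*D13)
        + (s*Q) * ((s*P)*D21 + (s*Q)*D22 + t*D23) + t * ((s*P)*D31 + (s*Q)*D32 + t*D33))).
    + unfold c12, c13, c23, mu. field. auto.
    + rewrite h1, h2, h3. ring.
  - replace (Q*Q + t*P*(t*P) + s*P*(s*P)) with (Q*Q + P*P*(s*s+t*t)) by ring. rewrite Hst. lra.
  - replace (-P*-P + t*Q*(t*Q) + s*Q*(s*Q)) with (P*P + Q*Q*(s*s+t*t)) by ring. rewrite Hst. lra.
  - lra.
  - replace (Q*-P + t*P*(t*Q) + s*P*(s*Q)) with (P*Q*(s*s+t*t-1)) by ring. rewrite Hst. ring.
  - ring.
  - ring.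
Qed.
Opaque good act partial.

Definition sfun (u : pt -> R) : pt -> R := act X3 u.

Lemma pp_eq u : pp u = fun y => partial 3 u y.
Proof. apply functional_extensionality; intros [[y1 y2] y3]. unfold pp.
  Transparent act. unfold act. Opaque act. red_pt. ring. Qed.
Lemma qq_eq u : qq u = fun y => (- exp (c3 y) / sqrt 2) * partial 1 u y + (exp (- c3 y) / sqrt 2) * partial 2 u y.
Proof. apply functional_extensionality; intros [[y1 y2] y3]. unfold qq.
  Transparent act. unfold act. Opaque act. red_pt. ring. Qed.
Lemma sfun_eq u : sfun u = fun y => (- exp (c3 y) / sqrt 2) * partial 1 u y + (- exp (- c3 y) / sqrt 2) * partial 2 u y.
Proof. apply functional_extensionality; intros [[y1 y2] y3]. unfold sfun.
  Transparent act. unfold act. Opaque act. red_pt. ring. Qed.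
Lemma rr_eq L u : rr L u = fun y => / sqrt L * sfun u y.
Proof. apply functional_extensionality; intros [[y1 y2] y3]. unfold rr, sfun.
  Transparent act. unfold act. Opaque act. red_pt. ring. Qed.
Lemma act_X3t L f x : act (X3t L) f x = / sqrt L * act X3 f x.
Proof. Transparent act. unfold act. Opaque act. destruct x as [[y1 y2] y3]. red_pt. ring. Qed.

Section U.
Variables (U : pt -> Prop) (u : pt -> R) (x : pt).
Hypothesis HC : C2_on U u.
Hypothesis HU : U x.

Lemma good_P k : (1 <= k <= 3)%nat -> good x (partial k u).
Proof. intros Hk. apply good_intro. intros j Hj. destruct (HC x HU) as [_ H]. destruct (H k Hk) as [_ [_ H2]].
  apply (H2 j Hj). Qed.

Lemma good_pp : good x (pp u).
Proof. rewrite pp_eq. apply good_P. lia. Qed.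
Lemma good_qq : good x (qq u).
Proof. pose proof (good_P 1 ltac:(lia)). pose proof (good_P 2 ltac:(lia)).
  rewrite qq_eq. good_tac; nz_tac. Qed.
Lemma good_sfun : good x (sfun u).
Proof. pose proof (good_P 1 ltac:(lia)). pose proof (good_P 2 ltac:(lia)).
  rewrite sfun_eq. good_tac; nz_tac. Qed.
Lemma good_rr L : good x (rr L u).
Proof. pose proof good_sfun. rewrite rr_eq. good_tac. Qed.

Hypothesis Hnc : ~ (pp u x = 0 /\ qq u x = 0).

Lemma pos_AB : 0 < pp u x ^ 2 + qq u x ^ 2.
Proof. destruct (Req_dec (pp u x) 0) as [E|E].
  - assert (qq u x <> 0) by tauto. rewrite E. assert (0 < qq u x ^ 2) by (apply pow2_gt_0; auto). lra.
  - assert (0 < pp u x ^ 2) by (apply pow2_gt_0; auto). assert (0 <= qq u x ^ 2) by apply pow2_ge_0. lra. Qed.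
Lemma pos_ABC L : 0 < pp u x ^ 2 + qq u x ^ 2 + rr L u x ^ 2.
Proof. pose proof pos_AB. assert (0 <= rr L u x ^ 2) by apply pow2_ge_0. lra. Qed.

Lemma good_ll : good x (ll u).
Proof. pose proof good_pp; pose proof good_qq. unfold ll. apply good_sqrt. good_tac. apply pos_AB. Qed.
Lemma good_lL L : good x (lL L u).
Proof. pose proof good_pp; pose proof good_qq; pose proof (good_rr L). unfold lL. apply good_sqrt. good_tac. apply pos_ABC. Qed.
Lemma ll_pos : 0 < ll u x.
Proof. unfold ll. apply sqrt_lt_R0, pos_AB. Qed.
Lemma lL_pos L : 0 < lL L u x.
Proof. unfold lL. apply sqrt_lt_R0, pos_ABC. Qed.

End U.
Opaque good act partial.

Lemma e1_F L u : e1 u = F L (qbar u) (fun y => - pbar u y) zero.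
Proof. apply functional_extensionality; intros [[y1 y2] y3]. unfold e1.
  apply pt_eq; red_pt; ring. Qed.

Section M.
Variables (U : pt -> Prop) (u : pt -> R) (x : pt) (L : R).
Hypothesis HC : C2_on U u.
Hypothesis HU : U x.
Hypothesis Hnc : ~ (pp u x = 0 /\ qq u x = 0).
Hypothesis HL : 0 < L.

Let Hpp := good_pp U u x HC HU.
Let Hqq := good_qq U u x HC HU.
Let Hrr := good_rr U u x HC HU L.
Let Hll := good_ll U u x HC HU Hnc.
Let HlL := good_lL U u x HC HU Hnc L.
Let llpos := ll_pos u x Hnc.
Let lLpos := lL_pos u x Hnc L.

Lemma good_pbar : good x (pbar u).
Proof. unfold pbar. apply good_div; auto. lra. Qed.
Lemma good_qbar : good x (qbar u).
Proof. unfold qbar. apply good_div; auto. lra. Qed.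
Lemma good_pbarL : good x (pbarL L u).
Proof. unfold pbarL. apply good_div; auto. lra. Qed.
Lemma good_qbarL : good x (qbarL L u).
Proof. unfold qbarL. apply good_div; auto. lra. Qed.
Lemma good_rbarL : good x (rbarL L u).
Proof. unfold rbarL. apply good_div; auto. lra. Qed.

Lemma act_lL V : act V (lL L u) x =
  (pp u x * act V (pp u) x + qq u x * act V (qq u) x + rr L u x * act V (rr L u) x) / lL L u x.
Proof. unfold lL at 1. rewrite act_sqrt.
  - rewrite !act_plus, !act_pow2 by good_tac. fold (lL L u x). field. lra.
  - good_tac.
  - apply pos_ABC; auto.
Qed.

Lemma lL_sq : lL L u x * lL L u x = pp u x ^ 2 + qq u x ^ 2 + rr L u x ^ 2.
Proof. unfold lL. apply sqrt_sqrt. pose proof (pos_ABC u x Hnc L). lra. Qed.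
Lemma ll_sq : ll u x * ll u x = pp u x ^ 2 + qq u x ^ 2.
Proof. unfold ll. apply sqrt_sqrt. pose proof (pos_AB u x Hnc). lra. Qed.

Lemma unit_deriv V :
  pbarL L u x * act V (pbarL L u) x + qbarL L u x * act V (qbarL L u) x + rbarL L u x * act V (rbarL L u) x = 0.
Proof.
  unfold pbarL, qbarL, rbarL.
  rewrite !act_div by (auto; lra).
  rewrite !act_lL.
  pose proof lL_sq as Hl.
  set (l := lL L u x) in *. set (A := pp u x) in *. set (B := qq u x) in *. set (C := rr L u x) in *.
  set (a := act V (pp u) x). set (b := act V (qq u) x). set (c := act V (rr L u) x).
  transitivity ((A*a + B*b + C*c) * (l*l - (A^2+B^2+C^2)) / l^4).
  - field. lra.
  - rewrite Hl. field. lra.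
Qed.

Lemma meanH_eq beta : meanH L beta u x =
  act X1 (pbarL L u) x + act X2 (qbarL L u) x + act (X3t L) (rbarL L u) x.
Proof.
  pose proof good_pbar. pose proof good_qbar. pose proof good_pbarL. pose proof good_qbarL. pose proof good_rbarL.
  assert (HsL : 0 < sqrt L) by (apply sqrt_lt_R0; auto).
  unfold meanH. rewrite (e1_F L).
  change (e2 L u) with (F L (fun y => rbarL L u y * pbar u y) (fun y => rbarL L u y * qbar u y) (fun y => - (ll u y / lL L u y))).
  change (vL L u) with (F L (pbarL L u) (qbarL L u) (rbarL L u)).
  rewrite !term_F by (auto; good_tac; try apply good_zero; nz_tac).
  rewrite !act_F. unfold zero.
  set (P := pbar u x). set (Q := qbar u x). set (s := ll u x / lL L u x). set (t := rbarL L u x).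
  assert (EP : pbarL L u x = s * P). { unfold s, P, pbarL, pbar. field. split; lra. }
  assert (EQ : qbarL L u x = s * Q). { unfold s, Q, qbarL, qbar. field. split; lra. }
  set (D11 := act X1 (pbarL L u) x). set (D12 := act X1 (qbarL L u) x). set (D13 := act X1 (rbarL L u) x).
  set (D21 := act X2 (pbarL L u) x). set (D22 := act X2 (qbarL L u) x). set (D23 := act X2 (rbarL L u) x).
  set (D31 := act (X3t L) (pbarL L u) x). set (D32 := act (X3t L) (qbarL L u) x). set (D33 := act (X3t L) (rbarL L u) x).
  transitivity (TT (sqrt L) beta Q (-P) 0 (s*P) (s*Q) t D11 D12 D13 D21 D22 D23 D31 D32 D33
    + TT (sqrt L) beta (t*P) (t*Q) (-s) (s*P) (s*Q) t D11 D12 D13 D21 D22 D23 D31 D32 D33).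
  - rewrite EP, EQ. unfold TT. ring.
  - apply alg.
    + unfold P, Q, pbar, qbar. pose proof ll_sq as E.
      transitivity ((pp u x ^ 2 + qq u x ^ 2) / (ll u x * ll u x)); [field; lra | rewrite <- E; field; lra].
    + unfold s, t, rbarL. pose proof ll_sq as E. pose proof lL_sq as E'.
      transitivity ((ll u x * ll u x + rr L u x ^ 2) / (lL L u x * lL L u x)); [field; lra |].
      rewrite E, <- E'. field. lra.
    + lra.
    + rewrite <- EP, <- EQ. apply unit_deriv.
    + rewrite <- EP, <- EQ. apply unit_deriv.
    + rewrite <- EP, <- EQ. apply unit_deriv.
Qed.

End M.
Opaque good act partial.

Definition Phi (A B S0 a1 b1 c1 a2 b2 c2 a3 b3 c3 t : R) : R :=
  (a1 * sqrt (A^2 + B^2 + t * S0^2) - A * ((A * a1 + B * b1 + t * S0 * c1) / sqrt (A^2 + B^2 + t * S0^2)))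
     / (sqrt (A^2 + B^2 + t * S0^2))^2
  + (b2 * sqrt (A^2 + B^2 + t * S0^2) - B * ((A * a2 + B * b2 + t * S0 * c2) / sqrt (A^2 + B^2 + t * S0^2)))
     / (sqrt (A^2 + B^2 + t * S0^2))^2
  + t * ((c3 * sqrt (A^2 + B^2 + t * S0^2) - S0 * ((A * a3 + B * b3 + t * S0 * c3) / sqrt (A^2 + B^2 + t * S0^2)))
     / (sqrt (A^2 + B^2 + t * S0^2))^2).

Section Lim.
Variables (U : pt -> Prop) (u : pt -> R) (x : pt).
Hypothesis HC : C2_on U u.
Hypothesis HU : U x.
Hypothesis Hnc : ~ (pp u x = 0 /\ qq u x = 0).

Definition PhiU := Phi (pp u x) (qq u x) (sfun u x)
  (act X1 (pp u) x) (act X1 (qq u) x) (act X1 (sfun u) x)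
  (act X2 (pp u) x) (act X2 (qq u) x) (act X2 (sfun u) x)
  (act X3 (pp u) x) (act X3 (qq u) x) (act X3 (sfun u) x).

Lemma act_rr L V : act V (rr L u) x = / sqrt L * act V (sfun u) x.
Proof. pose proof (good_sfun U u x HC HU). rewrite rr_eq. rewrite act_mult by good_tac.
  rewrite act_const. ring. Qed.
Lemma rr_val L : rr L u x = / sqrt L * sfun u x.
Proof. rewrite rr_eq. reflexivity. Qed.

Lemma meanH_Phi L beta : 0 < L -> meanH L beta u x = PhiU (/ L).
Proof.
  intros HL.
  pose proof (good_pp U u x HC HU). pose proof (good_qq U u x HC HU). pose proof (good_rr U u x HC HU L).
  pose proof (good_lL U u x HC HU Hnc L). pose proof (lL_pos u x Hnc L).
  assert (HsL : 0 < sqrt L) by (apply sqrt_lt_R0; auto).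
  rewrite (meanH_eq U u x L HC HU Hnc HL beta).
  rewrite act_X3t. unfold pbarL, qbarL, rbarL.
  rewrite !act_div by (auto; lra).
  rewrite !(act_lL U u x L HC HU Hnc).
  rewrite !act_rr, !rr_val.
  unfold PhiU, Phi.
  assert (El : lL L u x = sqrt (pp u x ^ 2 + qq u x ^ 2 + / L * sfun u x ^ 2)).
  { unfold lL. rewrite rr_val. f_equal. pose proof (sqrt_sqrt L ltac:(lra)) as EL.
    set (sL := sqrt L) in *. rewrite <- EL. field. lra. }
  rewrite <- El.
  set (l := lL L u x) in *.
  pose proof (sqrt_sqrt L ltac:(lra)) as EL.
  set (sL := sqrt L) in *. rewrite <- EL.
  field. lra.
Qed.

Lemma Phi0 : PhiU 0 = act X1 (pbar u) x + act X2 (qbar u) x.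
Proof.
  pose proof (good_pp U u x HC HU). pose proof (good_qq U u x HC HU).
  pose proof (good_ll U u x HC HU Hnc). pose proof (ll_pos u x Hnc).
  unfold pbar, qbar. rewrite !act_div by (auto; lra).
  assert (Ell : forall V, act V (ll u) x = (pp u x * act V (pp u) x + qq u x * act V (qq u) x) / ll u x).
  { intro V. unfold ll at 1. rewrite act_sqrt.
    - rewrite !act_plus, !act_pow2 by good_tac. fold (ll u x). field. lra.
    - good_tac.
    - apply pos_AB; auto. }
  rewrite !Ell. unfold PhiU, Phi.
  rewrite !Rmult_0_l, !Rplus_0_r. fold (ll u x).
  field. lra.
Qed.

Lemma Phi_cont : continuous PhiU 0.
Proof.
  apply (ex_derive_continuous (K:=R_AbsRing) (V:=R_NormedModule)).
  pose proof (pos_AB u x Hnc) as HP.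
  unfold PhiU, Phi.
  set (A := pp u x) in *. set (B := qq u x) in *.
  assert (HP' : 0 < A * (A * 1) + B * (B * 1) + 0 * (sfun u x * (sfun u x * 1))) by (simpl in HP; lra).
  assert (Hs : 0 < sqrt (A * (A * 1) + B * (B * 1) + 0 * (sfun u x * (sfun u x * 1)))) by (apply sqrt_lt_R0; auto).
  auto_derive.
  repeat split; try lra; apply Rgt_not_eq; repeat apply Rmult_lt_0_compat; lra.
Qed.

End Lim.

Theorem proposition4p7 (beta : R) (U : pt -> Prop) (u : pt -> R) :
  open U ->
  C2_on U u ->
  compact_set (fun x => U x /\ u x = 0) ->
  (forall x, U x -> u x = 0 -> egrad_nonzero u x) ->
  forall x : pt, U x -> u x = 0 ->
    ~ (pp u x = 0 /\ qq u x = 0) ->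
    is_lim (fun L => meanH L beta u x) p_infty
      (act X1 (pbar u) x + act X2 (qbar u) x).
Proof.
  intros Hopen HC Hcomp Hreg x HU Hux Hnc.
  rewrite <- (Phi0 U u x HC HU Hnc).
  apply is_lim_ext_loc with (f := fun L => PhiU u x (/ L)).
  - exists 0. intros L HL. symmetry. apply (meanH_Phi U u x HC HU Hnc); auto.
  - apply (is_lim_comp_continuous (fun L => / L) (PhiU u x) p_infty 0).
    + pose proof (is_lim_inv (fun y => y) p_infty p_infty (is_lim_id _)) as Hi.
      simpl in Hi. apply Hi. discriminate.
    + apply (Phi_cont u x Hnc).
Qed.
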